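(* Let $G=K_n$ and let $F(v)=1-e^{-v}$ ($v\ge0$) be the exponential distribution (which is regular with virtual value $\phi(v)=v-1$ and Myerson reserve price $1$). Then: (i) for every price $p>0$, every equilibrium in $\mathcal{N}_{p\cdot\mathbf{1}}$ is symmetric, i.e. of the form $T\cdot\mathbf{1}$ with $T\,F(T)^{n-1}=p$, and this $T$ is unique; (ii) for all sufficiently large $n$, the equilibrium revenue at price $1$ is less than $2\log\log n$, while at price $p=(\log n)(1-1/n)^{n-1}$ the equilibrium threshold is $\log n$ and the revenue equals $p>\tfrac14\log n$. Hence the uniform price equal to the Myerson reserve price can lose a factor $\Omega(\log n/\log\log n)$ relative to the best uniform price.
   Context: Public-goods pricing game on the complete graph $K_n$: buyer $i$'s neighbours are all $j\neq i$. Values i.i.d. with cumulative distribution function $F$, $F(\infty)=1$. An equilibrium for price vector $\mathbf{p}$ is $\mathbf{T}\in[0,\infty]^n$ (buyer $i$ purchases iff $v_i\ge T_i$) with $T_i=p_i/\prod_{j\neq i}F(T_j)$ for all $i$; $\mathcal{N}_{\mathbf{p}}$ is the set of equilibria; $\mathcal{R}(\mathbf{p},\mathbf{T})=\sum_ip_i(1-F(T_i))$; $p\cdot\mathbf{1}$ is the uniform price vector; $\log$ is the natural logarithm. *)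

(* Defs.v *)
From Stdlib Require Import Reals Lra Lia Arith.
Open Scope R_scope.

(* Extended non-negative thresholds [0, oo]. *)
Inductive ER : Type := Fin (x : R) | Inf.

Definition Fexp (v : R) : R := if Rle_dec 0 v then 1 - exp (- v) else 0.

Definition FextE (t : ER) : R := match t with Fin x => Fexp x | Inf => 1 end.

Fixpoint prod_upto (n : nat) (g : nat -> R) : R :=
  match n with O => 1 | S k => prod_upto k g * g k end.

(* prod_{j < n, j <> i} F(T_j)  -- neighbours of i in K_n *)
Definition prod_others (n i : nat) (T : nat -> ER) : R :=
  prod_upto n (fun j => if Nat.eqb j i then 1 else FextE (T j)).

Fixpoint sum_upto (n : nat) (g : nat -> R) : R :=
  match n with O => 0 | S k => sum_upto k g + g k end.

Definition in_dom (t : ER) : Prop := match t with Fin x => 0 <= x | Inf => True end.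

(* T_i = p_i / P with convention p_i / 0 = oo (used with p_i > 0). *)
Definition threshold_eq (pi P : R) (t : ER) : Prop :=
  (P = 0 -> t = Inf) /\ (P <> 0 -> t = Fin (pi / P)).

Definition is_equilibrium (n : nat) (p : nat -> R) (T : nat -> ER) : Prop :=
  forall i, (i < n)%nat -> in_dom (T i) /\ threshold_eq (p i) (prod_others n i T) (T i).

Definition revenue (n : nat) (p : nat -> R) (T : nat -> ER) : R :=
  sum_upto n (fun i => p i * (1 - FextE (T i))).

(* Main.v *)
Require Import Defs.
From Stdlib Require Import Reals Lra Lia Arith.
From Coquelicot Require Import Coquelicot.
Open Scope R_scope.

Lemma exp_pow a k : exp a ^ k = exp (INR k * a).
Proof.
  induction k as [|k IH]; simpl pow. { simpl. rewrite Rmult_0_l, exp_0; reflexivity. }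
  rewrite IH, S_INR, <- exp_plus. f_equal; ring.
Qed.

Lemma exp_lt1 x : 0 < x -> 0 < exp (- x) < 1.
Proof. intros. split. apply exp_pos. rewrite <- exp_0. apply exp_increasing. lra. Qed.

Lemma Fexp_pos x : 0 < x -> Fexp x = 1 - exp (- x).
Proof. intros. unfold Fexp. destruct (Rle_dec 0 x); [reflexivity| lra]. Qed.

Lemma Fexp_nn x : 0 <= x -> Fexp x = 1 - exp (- x).
Proof. intros. unfold Fexp. destruct (Rle_dec 0 x); [reflexivity| lra]. Qed.

Lemma Fexp_ge0 x : 0 <= Fexp x.
Proof. unfold Fexp. destruct (Rle_dec 0 x). 2: lra.
  destruct (Req_dec x 0). subst. rewrite Ropp_0, exp_0; lra.
  pose proof (exp_lt1 x). lra. Qed.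

Lemma mono a b : 0 < a < b -> a * (1 - exp (-b)) < b * (1 - exp (-a)).
Proof.
  intros [Ha Hab].
  destruct (MVT_cor2 (fun x => x * (1 - exp (-a)) - a * (1 - exp (-x)))
     (fun x => (1 - exp (-a)) - a * exp (-x)) a b Hab) as [c [Hc1 Hc2]].
  { intros c _. apply is_derive_Reals. auto_derive; auto. ring. }
  assert (exp (-c) < exp (-a)) by (apply exp_increasing; lra).
  assert (1 + a < exp a) by (apply exp_ineq1; lra).
  assert (exp (-a) * exp a = 1) by (rewrite <- exp_plus; replace (-a+a) with 0 by ring; apply exp_0).
  assert (0 < exp (-a)) by apply exp_pos.
  assert (0 < 1 - exp (-a) - a * exp (-c)) by nra.
  nra.
Qed.

Lemma prod_ext n f g : (forall j, (j < n)%nat -> f j = g j) -> prod_upto n f = prod_upto n g.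
Proof. induction n; simpl; intros H; auto. rewrite IHn by (intros; apply H; lia). rewrite H by lia. reflexivity. Qed.

Lemma sum_ext n f g : (forall j, (j < n)%nat -> f j = g j) -> sum_upto n f = sum_upto n g.
Proof. induction n; simpl; intros H; auto. rewrite IHn by (intros; apply H; lia). rewrite H by lia. reflexivity. Qed.

Lemma sum_const n c : sum_upto n (fun _ => c) = INR n * c.
Proof. induction n; simpl sum_upto. simpl; ring. rewrite IHn, S_INR; ring. Qed.

Lemma prod_pos n g : (forall j, (j < n)%nat -> 0 < g j) -> 0 < prod_upto n g.
Proof. induction n; simpl; intros H. lra. apply Rmult_lt_0_compat. apply IHn; intros; apply H; lia. apply H; lia. Qed.

Lemma prod_nn n g : (forall j, (j < n)%nat -> 0 <= g j) -> 0 <= prod_upto n g.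
Proof. induction n; simpl; intros H. lra. apply Rmult_le_pos. apply IHn; intros; apply H; lia. apply H; lia. Qed.

Lemma prod_skip_out n i g : (n <= i)%nat ->
  prod_upto n (fun j => if Nat.eqb j i then 1 else g j) = prod_upto n g.
Proof. intros. apply prod_ext. intros j Hj. destruct (Nat.eqb_spec j i). lia. reflexivity. Qed.

Lemma prod_skip n i g : (i < n)%nat ->
  prod_upto n (fun j => if Nat.eqb j i then 1 else g j) * g i = prod_upto n g.
Proof.
  induction n; intros Hi. lia. simpl.
  destruct (Nat.eqb_spec n i).
  - subst. rewrite prod_skip_out by lia. ring.
  - rewrite <- IHn by lia. ring.
Qed.

Lemma prod_constc n c : prod_upto n (fun _ => c) = c ^ n.
Proof. induction n; cbn [prod_upto pow]. reflexivity. rewrite IHn; ring. Qed.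

Lemma prod_const_skip n i c : (i < n)%nat ->
  prod_upto n (fun j => if Nat.eqb j i then 1 else c) = c ^ (n - 1).
Proof.
  induction n; intros Hi. lia. cbn [prod_upto].
  destruct (Nat.eqb_spec n i).
  - subst. pose proof (prod_skip_out i i (fun _ => c) (le_n i)) as E. simpl in E. rewrite E.
    replace (S i - 1)%nat with i by lia. rewrite prod_constc. ring.
  - rewrite IHn by lia. replace (S n - 1)%nat with (S (n-1)) by lia. cbn [pow]. ring.
Qed.

Lemma gmono a b k : 0 <= a < b -> a * Fexp a ^ k < b * Fexp b ^ k.
Proof.
  intros [Ha Hab].
  rewrite (Fexp_nn a), (Fexp_nn b) by lra.
  assert (exp (-b) < exp (-a)) by (apply exp_increasing; lra).
  pose proof (exp_lt1 b ltac:(lra)).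
  assert (0 <= 1 - exp (-a)).
  { destruct (Req_dec a 0). subst. rewrite Ropp_0, exp_0. lra. pose proof (exp_lt1 a). lra. }
  assert ((1 - exp (-a)) ^ k <= (1 - exp (-b)) ^ k) by (apply pow_incr; lra).
  assert (0 < (1 - exp (-b)) ^ k) by (apply pow_lt; lra).
  assert (0 <= (1 - exp (-a)) ^ k) by (apply pow_le; lra).
  nra.
Qed.

Lemma FextE_ge0 t : 0 <= FextE t.
Proof. destruct t; simpl. apply Fexp_ge0. lra. Qed.

Lemma part1 (n : nat) (p : R) : (1 <= n)%nat -> 0 < p ->
     forall T : nat -> ER, is_equilibrium n (fun _ => p) T ->
       exists t : R, 0 <= t /\
         (forall i, (i < n)%nat -> T i = Fin t) /\
         t * Fexp t ^ (n - 1) = p /\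
         (forall t' : R, 0 <= t' -> t' * Fexp t' ^ (n - 1) = p -> t' = t).
Proof.
  intros Hn Hp T H.
  assert (HPnn : forall i, 0 <= prod_others n i T).
  { intros i. unfold prod_others. apply prod_nn. intros j _.
    destruct (Nat.eqb j i). lra. apply FextE_ge0. }
  assert (HF : forall j, (j < n)%nat -> 0 < FextE (T j)).
  { intros j Hj. destruct (H j Hj) as [_ [H0 H1]].
    destruct (Req_dec (prod_others n j T) 0) as [E|E].
    - rewrite (H0 E). simpl. lra.
    - rewrite (H1 E). simpl. pose proof (HPnn j).
      assert (0 < p / prod_others n j T) by (apply Rdiv_lt_0_compat; lra).
      rewrite Fexp_pos by lra. pose proof (exp_lt1 _ H3). lra. }
  assert (HP : forall i, (i < n)%nat -> 0 < prod_others n i T).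
  { intros i Hi. unfold prod_others. apply prod_pos. intros j Hj.
    destruct (Nat.eqb j i). lra. apply HF; auto. }
  set (x := fun i => p / prod_others n i T).
  assert (HT : forall i, (i < n)%nat -> T i = Fin (x i)).
  { intros i Hi. destruct (H i Hi) as [_ [_ H1]]. apply H1. specialize (HP i Hi). lra. }
  assert (Hx : forall i, (i < n)%nat -> 0 < x i).
  { intros i Hi. unfold x. apply Rdiv_lt_0_compat; auto. }
  set (Q := prod_upto n (fun j => FextE (T j))).
  assert (HQ : 0 < Q) by (apply prod_pos; auto).
  assert (Hkey : forall i, (i < n)%nat -> x i * Q = p * Fexp (x i)).
  { intros i Hi. unfold Q. rewrite <- (prod_skip n i (fun j => FextE (T j))) by auto.
    fold (prod_others n i T). rewrite (HT i Hi). simpl. unfold x.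
    specialize (HP i Hi). field. lra. }
  assert (Heq : forall i, (i < n)%nat -> x i = x 0%nat).
  { intros i Hi.
    assert (H0n : (0 < n)%nat) by lia.
    pose proof (Hkey i Hi) as K1. pose proof (Hkey 0%nat H0n) as K2.
    pose proof (Hx i Hi) as X1. pose proof (Hx 0%nat H0n) as X2.
    rewrite (Fexp_pos (x i)) in * by auto. rewrite (Fexp_pos (x 0%nat)) in * by auto.
    assert (E : x i * (1 - exp (- x 0%nat)) = x 0%nat * (1 - exp (- x i))).
    { apply Rmult_eq_reg_r with Q; [|lra].
      replace (x i * (1 - exp (- x 0%nat)) * Q) with ((x i * Q) * (1 - exp (- x 0%nat))) by ring.
      replace (x 0%nat * (1 - exp (- x i)) * Q) with ((x 0%nat * Q) * (1 - exp (- x i))) by ring.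
      rewrite K1, K2. ring. }
    destruct (Rtotal_order (x i) (x 0%nat)) as [L|[L|L]]; auto.
    - pose proof (mono (x i) (x 0%nat) (conj X1 L)). lra.
    - pose proof (mono (x 0%nat) (x i) (conj X2 L)). lra. }
  assert (H0n : (0 < n)%nat) by lia.
  exists (x 0%nat). pose proof (Hx 0%nat H0n).
  assert (Hall : forall i, (i < n)%nat -> T i = Fin (x 0%nat)).
  { intros i Hi. rewrite HT by auto. rewrite Heq by auto. reflexivity. }
  assert (Hprod : prod_others n 0 T = Fexp (x 0%nat) ^ (n - 1)).
  { unfold prod_others. rewrite <- (prod_const_skip n 0 (Fexp (x 0%nat))) by auto.
    apply prod_ext. intros j Hj. rewrite Hall by auto. reflexivity. }
  assert (Hsol : x 0%nat * Fexp (x 0%nat) ^ (n - 1) = p).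
  { rewrite <- Hprod. unfold x. specialize (HP 0%nat H0n). field. lra. }
  split; [lra|]. split; [exact Hall|]. split; [exact Hsol|].
  intros t' Ht' E.
  destruct (Rtotal_order t' (x 0%nat)) as [L|[L|L]]; auto.
  - pose proof (gmono t' (x 0%nat) (n-1) (conj Ht' L)). lra.
  - assert (0 <= x 0%nat) by lra. pose proof (gmono (x 0%nat) t' (n-1) (conj H1 L)). lra.
Qed.

Lemma const_equil n p t : 0 <= t -> t * Fexp t ^ (n - 1) = p -> p <> 0 ->
  is_equilibrium n (fun _ => p) (fun _ => Fin t).
Proof.
  intros Ht E Hp i Hi. split. simpl; auto.
  assert (HP : prod_others n i (fun _ => Fin t) = Fexp t ^ (n-1)).
  { unfold prod_others. simpl FextE. apply prod_const_skip; auto. }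
  rewrite HP. split.
  - intros Z. rewrite Z in E. exfalso. apply Hp. rewrite <- E. ring.
  - intros NZ. f_equal. rewrite <- E. field. auto.
Qed.

Lemma bernoulli a k : 0 <= a <= 1 -> 1 - INR k * a <= (1 - a) ^ k.
Proof.
  intros Ha. induction k. simpl. lra.
  rewrite S_INR. simpl pow.
  assert (0 <= INR k) by apply pos_INR.
  assert ((1 - INR k * a) * (1 - a) <= (1-a) ^ k * (1 - a)) by (apply Rmult_le_compat_r; lra).
  nra.
Qed.

Lemma exist_sol n : (2 <= n)%nat -> exists t, 0 < t /\ t * Fexp t ^ (n - 1) = 1.
Proof.
  intros Hn.
  set (f := fun t => t * (1 - exp (- t)) ^ (n - 1) - 1).
  assert (Hc : continuity f).
  { intros x. assert (D : derivable_pt_lim f x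
      ((1 - exp (- x)) ^ (n - 1) + x * (INR (n-1) * (1 - exp (- x)) ^ (n-1-1) * exp (- x)))).
    { apply is_derive_Reals. unfold f. auto_derive; auto. 
      destruct (n - 1)%nat eqn:En. lia. replace (S n0 - 1)%nat with n0 by lia. simpl pred. unfold Rminus. set (u := exp (- x)). set (w := INR (S n0)). simpl pow. ring. }
    apply (derivable_continuous_pt f x (exist _ _ D)). }
  assert (HnR : 2 <= INR n) by (apply (le_INR 2 n) in Hn; simpl in Hn; lra).
  assert (E1 : INR (n - 1) = INR n - 1) by (rewrite minus_INR by lia; simpl; ring).
  assert (f0 : f 0 < 0).
  { unfold f. lra. }
  assert (fn : 0 < f (INR n)).
  { unfold f. pose proof (exp_lt1 (INR n) ltac:(lra)).
    pose proof (bernoulli (exp (- INR n)) (n-1) ltac:(lra)).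
    assert (1 + INR n < exp (INR n)) by (apply exp_ineq1; lra).
    assert (exp (- INR n) * exp (INR n) = 1) by (rewrite <- exp_plus; replace (- INR n + INR n) with 0 by ring; apply exp_0).
    rewrite E1 in H0.
    set (e := exp (- INR n)) in *. set (X := (1 - e) ^ (n - 1)) in *.
    assert (e * (1 + INR n) < 1) by nra.
    assert (INR n * X >= INR n * (1 - (INR n - 1) * e)) by nra.
    nra. }
  destruct (IVT f 0 (INR n) Hc ltac:(lra) f0 fn) as [z [Hz Fz]].
  assert (z <> 0). { intro Z. rewrite Z in Fz. lra. }
  exists z. split. lra. rewrite Fexp_nn by lra. unfold f in Fz; cbv beta in Fz. lra.
Qed.

Lemma rev_const n p T t : 0 <= t -> (forall i, (i < n)%nat -> T i = Fin t) ->
  revenue n (fun _ => p) T = INR n * (p * exp (- t)).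
Proof.
  intros Ht H. unfold revenue. rewrite (sum_ext n _ (fun _ => p * exp (- t))).
  apply sum_const. intros j Hj. rewrite H by auto. simpl. rewrite Fexp_nn by auto. ring.
Qed.

Lemma big_facts n : (16 <= n)%nat -> 16 <= INR n /\ 2 < ln (INR n) /\ 1/2 < ln (ln (INR n)).
Proof.
  intros Hn. assert (H16 : 16 <= INR n) by (apply le_INR in Hn; simpl in Hn; lra).
  pose proof exp_le_3. pose proof (exp_pos 1).
  assert (E2 : exp 2 = exp 1 * exp 1) by (rewrite <- exp_plus; f_equal; ring).
  assert (L2 : 2 < ln (INR n)).
  { rewrite <- (ln_exp 2) at 1. apply ln_increasing. apply exp_pos. nra. }
  assert (Eh : exp (1/2) * exp (1/2) = exp 1) by (rewrite <- exp_plus; f_equal; field).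
  pose proof (exp_pos (1/2)).
  assert (exp (1/2) < 2) by nra.
  split; auto. split; auto.
  rewrite <- (ln_exp (1/2)) at 1. apply ln_increasing. auto. lra.
Qed.

Theorem mainTheorem15 :
  (* (i) *)
  (forall (n : nat) (p : R), (1 <= n)%nat -> 0 < p ->
     forall T : nat -> ER, is_equilibrium n (fun _ => p) T ->
       exists t : R, 0 <= t /\
         (forall i, (i < n)%nat -> T i = Fin t) /\
         t * Fexp t ^ (n - 1) = p /\
         (forall t' : R, 0 <= t' -> t' * Fexp t' ^ (n - 1) = p -> t' = t))
  /\
  (* (ii) *)
  (exists N : nat, forall n : nat, (N <= n)%nat ->
     (exists T : nat -> ER, is_equilibrium n (fun _ => 1) T) /\
     (forall T : nat -> ER, is_equilibrium n (fun _ => 1) T ->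
        revenue n (fun _ => 1) T < 2 * ln (ln (INR n))) /\
     (let p := ln (INR n) * (1 - 1 / INR n) ^ (n - 1) in
      is_equilibrium n (fun _ => p) (fun _ => Fin (ln (INR n))) /\
      (forall T : nat -> ER, is_equilibrium n (fun _ => p) T ->
         (forall i, (i < n)%nat -> T i = Fin (ln (INR n))) /\
         revenue n (fun _ => p) T = p) /\
      p > ln (INR n) / 4)).
Proof.
  split. exact part1.
  exists 16%nat. intros n Hn.
  destruct (big_facts n Hn) as [H16 [L2 LL]].
  assert (E1 : INR (n - 1) = INR n - 1) by (rewrite minus_INR by lia; simpl; ring).
  split; [|split].
  - destruct (exist_sol n ltac:(lia)) as [t [Ht E]].
    exists (fun _ => Fin t). apply const_equil; auto; lra.
  - intros T HT.
    destruct (part1 n 1 ltac:(lia) ltac:(lra) T HT) as [t [Ht [HTi [E _]]]].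
    rewrite (rev_const n 1 T t Ht HTi).
    assert (Htp : 0 < t). { destruct (Req_dec t 0). subst. rewrite Rmult_0_l in E. lra. lra. }
    rewrite Fexp_pos in E by auto.
    pose proof (exp_lt1 t Htp) as He.
    set (e := exp (- t)) in *.
    assert (B1 : 1 - e <= exp (- e)).
    { pose proof (exp_ineq1 (- e) ltac:(lra)). lra. }
    assert (B2 : (1 - e) ^ (n-1) <= exp (INR (n-1) * - e)).
    { rewrite <- exp_pow. apply pow_incr. lra. }
    assert (B3 : 1 <= t * exp (INR (n-1) * - e)).
    { rewrite <- E. apply Rmult_le_compat_l; lra. }
    assert (B4 : INR (n-1) * e <= ln t).
    { pose proof (ln_le 1 _ Rlt_0_1 B3) as B5. rewrite ln_1, ln_mult, ln_exp in B5 by (auto; apply exp_pos). lra. }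
    rewrite E1 in B4.
    destruct (Rle_or_lt t (ln (INR n))) as [C|C].
    + assert (ln t <= ln (ln (INR n))) by (apply ln_le; lra).
      assert (15 * e <= ln (ln (INR n))) by nra.
      nra.
    + assert (e < exp (- ln (INR n))) by (apply exp_increasing; lra).
      rewrite exp_Ropp, exp_ln in H by lra.
      assert (INR n * e < 1).
      { apply Rmult_lt_compat_l with (r := INR n) in H; [|lra]. rewrite Rinv_r in H; lra. }
      lra.
  - cbv zeta.
    set (L := ln (INR n)) in *.
    assert (HF : Fexp L = 1 - 1 / INR n).
    { rewrite Fexp_pos by lra. unfold L. rewrite exp_Ropp, exp_ln by lra. field. lra. }
    set (a := 1 / (INR n - 1)).
    assert (Ha : 0 < a) by (unfold a; apply Rdiv_lt_0_compat; lra).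
    assert (Ea : 1 + a < exp a) by (apply exp_ineq1; lra).
    assert (Hea : exp (- a) * exp a = 1) by (rewrite <- exp_plus; replace (-a + a) with 0 by ring; apply exp_0).
    assert (K1 : exp (- a) <= 1 - 1 / INR n).
    { assert ((1 - 1 / INR n) * (1 + a) = 1) by (unfold a; field; lra).
      pose proof (exp_pos (-a)). pose proof (exp_pos a).
      assert (0 < 1 - 1 / INR n).
      { assert (1 / INR n < 1) by (apply (Rmult_lt_reg_l (INR n)); [lra| field_simplify; lra]). lra. }
      nra. }
    assert (K2 : exp (- a) ^ (n - 1) <= (1 - 1 / INR n) ^ (n - 1))
      by (apply pow_incr; split; [left; apply exp_pos | auto]).
    rewrite exp_pow, E1 in K2.
    replace ((INR n - 1) * - a) with (- (1)) in K2 by (unfold a; field; lra).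
    rewrite exp_Ropp in K2.
    assert (K3 : 1/3 <= / exp 1).
    { pose proof exp_le_3. pose proof (exp_pos 1). assert (/3 <= / exp 1) by (apply Rinv_le_contravar; lra). lra. }
    assert (Pp : 0 < L * (1 - 1 / INR n) ^ (n - 1)) by (apply Rmult_lt_0_compat; lra).
    assert (Esol : L * Fexp L ^ (n - 1) = L * (1 - 1 / INR n) ^ (n - 1)) by (rewrite HF; reflexivity).
    split; [|split].
    + apply const_equil; auto; lra.
    + intros T HT.
      destruct (part1 n _ ltac:(lia) Pp T HT) as [t [Ht [HTi [E U]]]].
      assert (Lt : L = t) by (apply U; auto; lra).
      rewrite <- Lt in HTi.
      split; auto.
      rewrite (rev_const n _ T L ltac:(lra) HTi).
      assert (EL : exp (- L) = / INR n) by (unfold L; rewrite exp_Ropp, exp_ln; [reflexivity| lra]).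
      rewrite EL. field. lra.
    + nra.
Qed.
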